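(* Let $M$ be a matroid on $E$, $\mathfrak{S}\subseteq\mathcal{P}(E)$ and $Z\in\mathfrak{S}$. Then: (1) $\mathrm{ec}_{\mathfrak{S}}(M)-\mathrm{ec}_{\mathfrak{S}-\{Z\}}(M)=a_{\mathfrak{S}}(Z)\,b_{\mathfrak{S}}(Z)$; (2) for every $S\in\mathfrak{S}-\{Z\}$, $a_{\mathfrak{S}}(S)-a_{\mathfrak{S}-\{Z\}}(S)=a_{\mathfrak{S}}(Z)\,\mu_{\mathfrak{S}}(Z,S)$; (3) for every $S\in\mathfrak{S}-\{Z\}$, $b_{\mathfrak{S}}(S)-b_{\mathfrak{S}-\{Z\}}(S)=\mu_{\mathfrak{S}}(S,Z)\,b_{\mathfrak{S}}(Z)$.
   Context: $M$ has rank $k$. For $\mathfrak{T}\subseteq\mathcal{P}(E)$, viewed as a poset under inclusion with Möbius function $\mu_{\mathfrak{T}}$: $c(T)=\#T-\mathrm{rk}\,T$; $a_{\mathfrak{T}}(S)=\sum_{T\in\mathfrak{T}}c(T)\mu_{\mathfrak{T}}(T,S)$ (equivalently $a_{\mathfrak{T}}(S)=c(S)-\sum_{T\in\mathfrak{T},T\subsetneq S}a_{\mathfrak{T}}(T)$); $b_{\mathfrak{T}}(T)=\sum_{S\in\mathfrak{T}}(k-\mathrm{rk}\,S)\mu_{\mathfrak{T}}(T,S)$; $\mathrm{ec}_{\mathfrak{T}}(M)=\sum_{S\in\mathfrak{T}}(k-\mathrm{rk}\,S)a_{\mathfrak{T}}(S)$. *)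

(* Defs.v *)
From mathcomp Require Import all_boot all_order all_algebra.
Set Implicit Arguments. Unset Strict Implicit. Unset Printing Implicit Defensive.
Import GRing.Theory Num.Theory.
Local Open Scope ring_scope.

(* A matroid on the finite ground set E = [set: T], given by its rank function
   (rank axioms R1-R3). *)
Definition is_matroid_rank (T : finType) (rk : {set T} -> nat) : Prop :=
  [/\ forall A : {set T}, (rk A <= #|A|)%N,
      forall A B : {set T}, A \subset B -> (rk A <= rk B)%N
    & forall A B : {set T}, (rk (A :|: B) + rk (A :&: B) <= rk A + rk B)%N].

(* The recursion uses fuel (#|y|.+1), which suffices
   since #|z| < #|y| whenever z is a proper subset of y. *)
Fixpoint mobius_fuel (T : finType) (F : {set {set T}}) (n : nat)
    (x y : {set T}) : int :=
  match n with
  | 0%N => 0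
  | n'.+1 =>
      if x == y then 1
      else if x \proper y then
        - \sum_(z in F | (x \subset z) && (z \proper y)) mobius_fuel F n' x z
      else 0
  end.

Definition mobius (T : finType) (F : {set {set T}}) (x y : {set T}) : int :=
  mobius_fuel F (#|y|.+1) x y.

Section Invariants.
Variables (T : finType) (rk : {set T} -> nat).

Definition mrank : nat := rk [set: T].

Definition cnull (A : {set T}) : int := (#|A|%:Z - (rk A)%:Z).

Definition acoef (F : {set {set T}}) (S : {set T}) : int :=
  \sum_(A in F) cnull A * mobius F A S.

Definition bcoef (F : {set {set T}}) (A : {set T}) : int :=
  \sum_(S in F) ((mrank)%:Z - (rk S)%:Z) * mobius F A S.

Definition ec (F : {set {set T}}) : int :=
  \sum_(S in F) ((mrank)%:Z - (rk S)%:Z) * acoef F S.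
End Invariants.

(* Main.v *)
Require Import Defs.
From mathcomp Require Import all_boot all_order all_algebra.
From mathcomp Require Import ring.
Import GRing.Theory Num.Theory.
Local Open Scope ring_scope.

Section Mob.
Variable T : finType.
Implicit Types (F : {set {set T}}) (x y z w : {set T}).

Lemma fuel_eq F n m x y : (#|y| < n)%N -> (#|y| < m)%N ->
  mobius_fuel F n x y = mobius_fuel F m x y.
Proof.
elim: n m y => [|n IH] [|m] y //= Hn Hm.
case: (x == y) => //; case: (x \proper y) => //; congr (- _).
apply: eq_bigr => w /andP[_ /andP[_ wy]].
have := proper_card wy => lt; apply: IH.
  exact: leq_trans lt Hn.
exact: leq_trans lt Hm.
Qed.

Lemma mobiusE F x y : mobius F x y =
  if x == y then 1 else if x \proper y then
   - \sum_(z in F | (x \subset z) && (z \proper y)) mobius F x z else 0.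
Proof.
rewrite {1}/mobius /=; case: (x == y) => //; case: (x \proper y) => //; congr (- _).
apply: eq_bigr => w /andP[_ /andP[_ wy]].
by rewrite /mobius; apply: fuel_eq => //; have := proper_card wy.
Qed.

Lemma mobius_id F x : mobius F x x = 1.
Proof. by rewrite mobiusE eqxx. Qed.

Lemma mobius0 F x y : ~~ (x \subset y) -> mobius F x y = 0.
Proof.
move=> nxy; rewrite mobiusE.
have -> : (x == y) = false.
  by apply/negbTE; apply: contraNneq nxy => ->; rewrite subxx.
by rewrite properEneq (negbTE nxy) andbF.
Qed.

Lemma mobius_del F z x y : z \in F -> x != z -> y != z ->
  mobius (F :\ z) x y = mobius F x y - mobius F x z * mobius F z y.
Proof.
move=> zF xz.
have [n lt_yn] := ubnP #|y|; elim: n y lt_yn => // n IH y lt_yn yz.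
have Hprod : ~~ ((x \subset z) && (z \subset y)) -> mobius F x z * mobius F z y = 0.
  case/nandP => H; first by rewrite [mobius F x z]mobius0 // mul0r.
  by rewrite [mobius F z y]mobius0 // mulr0.
rewrite [mobius (F :\ z) x y]mobiusE [mobius F x y]mobiusE.
case: eqP => [exy|xy].
  rewrite Hprod ?subr0 //; apply/negP => /andP[h1 h2].
  by move: xz; rewrite eqEsubset h1 exy h2.
case: ifP => pxy; last first.
  rewrite Hprod ?subr0 //; apply/negP => /andP[h1 h2].
  by move: pxy; rewrite properEneq (subset_trans h1 h2) andbT; move/eqP: xy => ->.
have lt_w : forall w, w \proper y -> (#|w| < n)%N.
  by move=> w wy; apply: leq_trans (proper_card wy) _.
rewrite (eq_bigr (fun w => mobius F x w - mobius F x z * mobius F z w)); last first.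
  move=> w /andP[]; rewrite in_setD1 => /andP[wz _] /andP[_ wy].
  by apply: IH => //; apply: lt_w.
rewrite sumrB -big_distrr /=.
case: (boolP ((x \subset z) && (z \proper y))) => [/andP[xsz zpy]|hn].
  rewrite [X in _ = - X - _](bigD1 z) /=; last by rewrite zF xsz zpy.
  have zy : (z == y) = false by rewrite eq_sym (negbTE yz).
  rewrite [mobius F z y]mobiusE zy zpy.
  rewrite [X in _ = _ - _ * - X](bigD1 z) /=; last by rewrite zF subxx zpy.
  rewrite mobius_id.
  have E1 : \sum_(w in F :\ z | (x \subset w) && (w \proper y)) mobius F x w =
            \sum_(i | [&& i \in F, x \subset i & i \proper y] && (i != z)) mobius F x i.
    by apply: eq_bigl => w; rewrite in_setD1; case: (w == z); case: (w \in F); rewrite /= ?andbF ?andbT.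
  have E2 : \sum_(w in F :\ z | (x \subset w) && (w \proper y)) mobius F z w =
            \sum_(i | [&& i \in F, z \subset i & i \proper y] && (i != z)) mobius F z i.
    rewrite big_mkcond [RHS]big_mkcond; apply: eq_bigr => w _.
    rewrite in_setD1; case: (w == z); case: (w \in F); rewrite /= ?andbF ?andbT //.
    case zw: (z \subset w) => /=.
      by rewrite (subset_trans xsz zw).
    by case: ifP => // _; rewrite mobius0 // zw.
  rewrite E1 E2; ring.
have Hpz : forall w, w \subset y -> mobius F x z * mobius F z w = 0.
  move=> w wy; case xsz: (x \subset z); last by rewrite mobius0 ?xsz // mul0r.
  rewrite [mobius F z w]mobius0 ?mulr0 //; apply/negP => zw.
  move: hn; rewrite xsz /= properEneq eq_sym yz (subset_trans zw wy).
  by [].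
rewrite Hpz // subr0.
have -> : mobius F x z * \sum_(i in F :\ z | (x \subset i) && (i \proper y)) mobius F z i = 0.
  rewrite big_distrr big1 //.
  by move=> w /andP[_ /andP[_ /proper_sub wy]]; apply: Hpz.
rewrite subr0; congr (- _); apply: eq_bigl => w; rewrite in_setD1.
case: eqP => [->|_] //=.
rewrite zF /=; apply/esym/negP => /andP[xsz zpy].
by move: hn; rewrite xsz zpy.
Qed.

End Mob.

Theorem proposition6p3 (T : finType) (rk : {set T} -> nat)
  (Hrk : is_matroid_rank rk) (S : {set {set T}}) (Z : {set T})
  (HZ : Z \in S) :
  [/\ ec rk S - ec rk (S :\ Z) = acoef rk S Z * bcoef rk S Z,
      (forall X, X \in S :\ Z ->
         acoef rk S X - acoef rk (S :\ Z) X = acoef rk S Z * mobius S Z X)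
    & (forall X, X \in S :\ Z ->
         bcoef rk S X - bcoef rk (S :\ Z) X = mobius S X Z * bcoef rk S Z)].
Proof.
have del : forall A X, A \in S :\ Z -> X \in S :\ Z ->
    mobius (S :\ Z) A X = mobius S A X - mobius S A Z * mobius S Z X.
  move=> A X; rewrite !in_setD1 => /andP[AZ _] /andP[XZ _].
  exact: mobius_del.
set w := fun S' : {set T} => ((mrank rk)%:Z - (rk S')%:Z).
have aS : forall X, acoef rk S X = cnull rk Z * mobius S Z X +
     \sum_(A in S :\ Z) cnull rk A * mobius S A X.
  by move=> X; rewrite /acoef (big_setD1 _ HZ).
have P2 : forall X, X \in S :\ Z ->
    acoef rk S X - acoef rk (S :\ Z) X = acoef rk S Z * mobius S Z X.
  move=> X HX.
  have -> : acoef rk (S :\ Z) X = \sum_(A in S :\ Z) cnull rk A * mobius S A X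
       - (\sum_(A in S :\ Z) cnull rk A * mobius S A Z) * mobius S Z X.
    rewrite /acoef big_distrl -sumrB; apply: eq_bigr => A HA.
    by rewrite del // mulrBr mulrA.
  rewrite !aS mobius_id; ring.
split => //.
- rewrite /ec (big_setD1 _ HZ) /=.
  have -> : \sum_(S' in S :\ Z) (w S') * acoef rk (S :\ Z) S' =
     \sum_(S' in S :\ Z) (w S') * acoef rk S S' -
     acoef rk S Z * \sum_(S' in S :\ Z) (w S') * mobius S Z S'.
    rewrite big_distrr -sumrB; apply: eq_bigr => A HA.
    have e := P2 A HA.
    have -> : acoef rk (S :\ Z) A = acoef rk S A - acoef rk S Z * mobius S Z A.
      by rewrite -e; ring.
    by rewrite /= mulrBr mulrCA.
  rewrite /bcoef (big_setD1 _ HZ) /= mobius_id -/(w Z).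
  rewrite -[\sum_(S' in S :\ Z) _ * mobius S Z S']/(\sum_(S' in S :\ Z) w S' * mobius S Z S').
  ring.
- move=> X HX; rewrite /bcoef (big_setD1 _ HZ) [in RHS](big_setD1 _ HZ) /= mobius_id.
  have -> : \sum_(S' in S :\ Z) ((mrank rk)%:Z - (rk S')%:Z) * mobius (S :\ Z) X S' =
     \sum_(S' in S :\ Z) ((mrank rk)%:Z - (rk S')%:Z) * mobius S X S' -
     mobius S X Z * \sum_(S' in S :\ Z) ((mrank rk)%:Z - (rk S')%:Z) * mobius S Z S'.
    rewrite big_distrr -sumrB; apply: eq_bigr => A HA.
    by rewrite /= del // mulrBr mulrCA.
  ring.
Qed.
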